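(* Fix any non-negative integer load vector $x^{(t_1)}$ with $\|x^{(t_1)}\|_{1} \leq n \cdot \mathrm{e}^{-(\log n)^{\sigma}}$ for some constant $\sigma \in (0,1)$. Consider a round $t_2 > t_1$ such that (for the given matchings) $[t_1,t_2]$ is $(n,n^{-3})$-smoothing, and let $Z:= \sum_{v \in V} y_v x_v^{(t_2)}$, where $y$ is any non-negative vector with $\|y \|_{1} = 1$. Then for any $\delta > 0$ (and $n$ sufficiently large), \[ \Pr\left[ Z \geq \mathrm{e}^{-\frac{1}{5} (\log n)^{\sigma}} + 8 \| y \|_{\infty} (\log n)^{\delta} \right] \leq \mathrm{e}^{-(\log n)^{\delta+\sigma}/ 6}. \]
   Context: $G=(V,E)$ has $n$ nodes; a matching $\mathbf{M}^{(t)}\subseteq E$ is identified with the symmetric matrix with entries $1/2$ on $(u,u),(v,v),(u,v),(v,u)$ for $\{u,v\}\in\mathbf{M}^{(t)}$, $1$ on the diagonal for unmatched nodes, $0$ elsewhere. Discrete protocol: for each $\{u,v\}\in\mathbf{M}^{(t)}$ both nodes get $\lfloor (x^{(t-1)}_u+x^{(t-1)}_v)/2\rfloor$ tokens and the excess token (if the sum is odd) goes to $u$ or $v$ with probability $1/2$ each, independently; unmatched nodes keep their load. Continuous process: $\xi^{(t)}=\xi^{(t-1)}\mathbf{M}^{(t)}$. $[t_1,t_2]$ is $(K,\epsilon)$-smoothing if every $\xi^{(t_1)}\in\mathbb{R}^n$ with discrepancy $\max_{u,v}|\xi_u-\xi_v|\le K$ yields $\xi^{(t_2)}$ with discrepancy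 at most $\epsilon$. The probability is over the random orientations. The paper assumes $n$ sufficiently large throughout. *)

(* Defs.v *)
From HB Require Import structures.
From mathcomp Require Import all_boot all_order all_algebra.
From mathcomp Require Import all_classical all_reals all_analysis.
Set Implicit Arguments. Unset Strict Implicit. Unset Printing Implicit Defensive.
Import Order.TTheory GRing.Theory Num.Theory.
Local Open Scope ring_scope.

Section Defs.
Variable R : realType.
Variable n : nat.

Definition simple_graph (E : rel 'I_n) : Prop :=
  (forall u v, E u v = E v u) /\ (forall u, ~~ E u u).

(* A matching is encoded by its partner function m : m u = v if {u,v} is in
   the matching, m u = u if u is unmatched. *)
Definition is_matching (E : rel 'I_n) (m : 'I_n -> 'I_n) : Prop :=
  (forall u, m (m u) = u) /\ (forall u, m u != u -> E u (m u)).

Definition matching_mx (m : 'I_n -> 'I_n) : 'M[R]_n :=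
  \matrix_(i, j)
    (if m i == i then (i == j)%:R
     else if (j == i) || (j == m i) then 2^-1 else 0).

Fixpoint cont_run (M : nat -> 'I_n -> 'I_n) (t1 : nat) (k : nat)
  (xi : 'rV[R]_n) : 'rV[R]_n :=
  match k with
  | 0 => xi
  | k'.+1 => cont_run M t1.+1 k' (xi *m matching_mx (M t1.+1))
  end.

Definition disc_le (xi : 'rV[R]_n) (K : R) : Prop :=
  forall u v, `|xi 0 u - xi 0 v| <= K.

Definition smoothing (M : nat -> 'I_n -> 'I_n) (t1 t2 : nat) (K eps : R)
  : Prop :=
  forall xi : 'rV[R]_n, disc_le xi K -> disc_le (cont_run M t1 (t2 - t1) xi) eps.

(* One round of the discrete protocol with matching m and coins c : for a
   matched pair {u,v} with u < v, the excess token goes to u if c u is true,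
   and to v otherwise (coins at non-minimal nodes are unused). *)
Definition dstep (m : 'I_n -> 'I_n) (c : 'I_n -> bool) (x : 'I_n -> nat)
  : 'I_n -> nat :=
  fun u =>
    if m u == u then x u
    else let s := (x u + x (m u))%N in
         (s./2 + (odd s && (if (u < m u)%N then c u else ~~ c (m u))))%N.

Fixpoint drun (M : nat -> 'I_n -> 'I_n) (t : nat)
  (cs : seq ('I_n -> bool)) (x : 'I_n -> nat) : 'I_n -> nat :=
  match cs with
  | [::] => x
  | c :: cs' => drun M t.+1 cs' (dstep (M t.+1) c x)
  end.

(* Sample space for k rounds: all coin vectors, uniform distribution. *)
Definition coins (k : nat) := {ffun 'I_k -> {ffun 'I_n -> bool}}.

Definition coin_seq (k : nat) (w : coins k) : seq ('I_n -> bool) :=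
  [seq (fun u => w i u) | i <- enum 'I_k].

Definition prob (k : nat) (P : pred (coins k)) : R :=
  #|P|%:R / #|{: coins k}|%:R.

Definition load_at (M : nat -> 'I_n -> 'I_n) (t1 t2 : nat)
  (x : 'I_n -> nat) (w : coins (t2 - t1)) : 'I_n -> nat :=
  drun M t1 (coin_seq w) x.

Definition norm_inf (y : 'I_n -> R) : R := \big[Num.max/0]_(v < n) `|y v|.

End Defs.

Arguments load_at {n} M t1 t2 x w.

(* Main.v *)
Require Import Defs.
From HB Require Import structures.
From mathcomp Require Import all_boot all_order all_algebra.
From mathcomp Require Import all_classical all_reals all_analysis.
From mathcomp Require Import ring lra.
Import Order.TTheory GRing.Theory Num.Theory.
Set Implicit Arguments. Unset Strict Implicit. Unset Printing Implicit Defensive.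
Local Open Scope ring_scope.

Section Part1.
Variable R : realType.
Variable n : nat.

Definition Phi (f : 'I_n -> R) (x : 'I_n -> nat) : R := \prod_v f v ^+ x v.
Definition Mv (m : 'I_n -> 'I_n) (f : 'I_n -> R) (u : 'I_n) : R :=
  (f u + f (m u)) / 2.

Lemma pair_prod (m : 'I_n -> 'I_n) (inv : forall u, m (m u) = u)
  (F : 'I_n -> R) :
  \prod_v F v = \prod_(r : 'I_n) ((if (r <= m r)%N then F r else 1) *
                         (if (r < m r)%N then F (m r) else 1)).
Proof.
rewrite big_split /= -!big_mkcond /=.
rewrite (bigID (fun v : 'I_n => (v <= m v)%N)) /=; congr (_ * _).
have injm : injective m by apply: (can_inj inv).
rewrite (reindex_inj injm) /=.
by apply: eq_bigl => r; rewrite inv -ltnNge.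
Qed.

Lemma key (h : nat) (o : bool) (a b : R) : 0 <= a -> 0 <= b ->
  0 <= a ^+ (h + o) * b ^+ h + a ^+ h * b ^+ (h + o) <=
  2 * ((a + b) / 2) ^+ (h.*2 + o).
Proof.
move=> a0 b0.
set g := (a + b) / 2.
have g0 : 0 <= g by rewrite /g divr_ge0 // addr_ge0.
have ab : a * b <= g * g.
  rewrite /g -subr_ge0.
  have -> : (a + b) / 2 * ((a + b) / 2) - a * b = ((a - b) / 2) ^+ 2 by field.
  by apply: sqr_ge0.
have abh : (a * b) ^+ h <= g ^+ h.*2.
  rewrite -addnn exprD -exprMn; apply: lerXn2r => //; rewrite nnegrE; apply: mulr_ge0 => //.
have abh0 : 0 <= (a * b) ^+ h by rewrite exprn_ge0 ?mulr_ge0.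
case: o => /=; rewrite ?addn0 ?addn1.
  rewrite !exprS -[a * a ^+ h * b ^+ h]mulrA -[a ^+ h * (b * b ^+ h)]mulrCA.
  rewrite -!exprMn -mulrDl.
  have -> : a + b = 2 * g by rewrite /g mulrC mulfVK // pnatr_eq0.
  apply/andP; split; first by rewrite mulr_ge0 // mulr_ge0.
  by rewrite -mulrA ler_pM2l //; apply: ler_wpM2l.
rewrite -exprMn -mulr2n.
apply/andP; split; first by rewrite mulrn_wge0.
by rewrite mulr_natl lerMn2r abh orbT.
Qed.

Lemma step_bound (m : 'I_n -> 'I_n) (inv : forall u, m (m u) = u)
  (f : 'I_n -> R) (f0 : forall v, 0 <= f v) (x : 'I_n -> nat) :
  \sum_(c : {ffun 'I_n -> bool}) Phi f (dstep m c x) <= 2 ^+ n * Phi (Mv m f) x.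
Proof.
pose K (r : 'I_n) (b : bool) :=
  (if (r <= m r)%N then f r ^+ dstep m (fun _ => b) x r else 1) *
  (if (r < m r)%N then f (m r) ^+ dstep m (fun _ => b) x (m r) else 1).
have HK : forall c : {ffun 'I_n -> bool}, Phi f (dstep m c x) = \prod_r K r (c r).
  move=> c; rewrite /Phi (pair_prod inv); apply: eq_bigr => r _; rewrite /K.
  case: ltngtP => hr.
  - rewrite /dstep.
    have nr : m r != r by rewrite neq_ltn hr orbT.
    have nmr : m (m r) != m r by rewrite inv eq_sym.
    by rewrite (negbTE nr) (negbTE nmr) hr inv ltnNge (ltnW hr) /=.
  - by [].
  - have e : m r = r by apply: val_inj.
    by rewrite /dstep e eqxx.
under eq_bigr do rewrite HK.
rewrite -(bigA_distr_bigA K) /=.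
have -> : (2:R) ^+ n = \prod_(r : 'I_n) 2 by rewrite prodr_const card_ord.
rewrite /Phi (pair_prod inv) -big_split /=.
apply: ler_prod => r _; rewrite big_bool /= /K.
have fX : forall v k, 0 <= f v ^+ k by move=> v k; apply: exprn_ge0.
case: ltngtP => hr.
- rewrite /dstep /Mv.
  have nr : m r != r by rewrite neq_ltn hr orbT.
  have nmr : m (m r) != m r by rewrite inv eq_sym.
  have h2 : (m r < r)%N = false by rewrite ltnNge ltnW.
  rewrite (negbTE nr) (negbTE nmr) inv hr h2 /= [(x (m r) + _)%N]addnC.
  set a := f r; set b := f (m r).
  have a0 : 0 <= a by apply: f0.
  have b0 : 0 <= b by apply: f0.
  set S := (x r + x (m r))%N.
  rewrite [b + a]addrC -exprD -/S andbT andbF addn0.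
  have := key (S./2) (odd S) a0 b0.
  by rewrite [((S./2).*2 + _)%N]addnC odd_double_half.
- by rewrite !mulr1; apply/andP; split; lra.
- have e : m r = r by apply: val_inj.
  rewrite /dstep /Mv e eqxx /= !mulr1.
  have -> : (f r + f r) / 2 = f r by field.
  have := fX r (x r); set q := f r ^+ x r => q0.
  by apply/andP; split; lra.
Qed.


Lemma sum_coins_step k (F : seq ('I_n -> bool) -> R) :
  \sum_(w : coins n k.+1) F (coin_seq w) =
  \sum_(c : {ffun 'I_n -> bool}) \sum_(w : coins n k) F ((fun u => c u) :: coin_seq w).
Proof.
rewrite pair_bigA /=.
pose h (p : {ffun 'I_n -> bool} * coins n k) : coins n k.+1 :=
  [ffun i => if unlift ord0 i is Some j then p.2 j else p.1].
pose hi (w : coins n k.+1) : {ffun 'I_n -> bool} * coins n k :=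
  (w ord0, [ffun j => w (lift ord0 j)]).
have hK : cancel h hi.
  move=> [c w]; rewrite /h /hi /=; congr (_, _).
    by rewrite ffunE unlift_none.
  by apply/ffunP => j; rewrite !ffunE liftK.
have hiK : cancel hi h.
  move=> w; apply/ffunP => i; rewrite /h /hi !ffunE.
  case: unliftP => [j ->|->] //=; by rewrite ffunE.
rewrite (reindex h) /=; last by exists hi => p _.
apply: eq_bigr => [[c w]] _ /=.
congr F.
rewrite /coin_seq enum_ordSl /= -map_comp.
congr (_ :: _).
  by apply: funext => u; rewrite ffunE unlift_none.
apply: eq_map => j /=; apply: funext => u; by rewrite ffunE liftK.
Qed.

Fixpoint Q (M : nat -> 'I_n -> 'I_n) (t k : nat) (f : 'I_n -> R) : 'I_n -> R :=
  match k with
  | 0 => f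
  | k'.+1 => Mv (M t.+1) (Q M t.+1 k' f)
  end.

Lemma Q_ge0 M k t f : (forall v, 0 <= f v) -> forall v, 0 <= Q M t k f v.
Proof.
elim: k t => [|k IH] t f0 v //=.
by rewrite /Mv divr_ge0 // addr_ge0 // IH.
Qed.

Lemma avg_bound (M : nat -> 'I_n -> 'I_n) (inv : forall t u, M t (M t u) = u) k :
  forall t x f, (forall v, 0 <= f v) ->
  \sum_(w : coins n k) Phi f (drun M t (coin_seq w) x) <=
    (2 ^+ n) ^+ k * Phi (Q M t k f) x.
Proof.
elim: k => [|k IH] t x f f0.
  rewrite (eq_bigr (fun _ => Phi f x)); last by move=> w _; rewrite /coin_seq enum_ord0.
  rewrite /= sumr_const card_ffun card_ord expn0 expr0 mul1r.
  by rewrite mulr1n.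
rewrite (sum_coins_step _ (fun cs => Phi f (drun M t cs x))) /=.
apply: (@le_trans _ _ (\sum_(c : {ffun 'I_n -> bool})
     (2 ^+ n) ^+ k * Phi (Q M t.+1 k f) (dstep (M t.+1) c x))).
  by apply: ler_sum => c _; apply: IH.
rewrite -mulr_sumr exprS [2 ^+ n * _]mulrC -mulrA ler_pM2l; last first.
  by rewrite exprn_gt0 // exprn_gt0.
by apply: step_bound => //; apply: Q_ge0.
Qed.

Lemma dual1 (m : 'I_n -> 'I_n) (xi : 'rV[R]_n) (h : 'I_n -> R) :
  \sum_u xi 0 u * Mv m h u = \sum_u (xi *m matching_mx R m) 0 u * h u.
Proof.
under [RHS]eq_bigr do rewrite mxE big_distrl /=.
rewrite exchange_big /=; apply: eq_bigr => j _.
under eq_bigr do rewrite -mulrA.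
rewrite -mulr_sumr; congr (_ * _).
under eq_bigr do rewrite mxE.
rewrite /Mv; case: eqP => e.
  rewrite (bigD1 j) //= eqxx mul1r big1 ?addr0; first by rewrite e; field.
  by move=> u /negbTE; rewrite eq_sym => ->; rewrite mul0r.
have ne : m j != j by apply/eqP.
rewrite (bigD1 j) //= eqxx /= (bigD1 (m j)) /=; last by [].
rewrite eqxx orbT big1 ?addr0; first by field.
by move=> u /andP [/negbTE -> /negbTE ->]; rewrite mul0r.
Qed.

Lemma dual (M : nat -> 'I_n -> 'I_n) k : forall t (xi : 'rV[R]_n) g,
  \sum_u xi 0 u * Q M t k g u = \sum_v (cont_run M t k xi) 0 v * g v.
Proof.
elim: k => [|k IH] t xi g //=.
by rewrite dual1 IH.
Qed.

Lemma Q_one M k t : Q M t k (fun _ => 1) = (fun _ => 1).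
Proof.
elim: k t => [|k IH] t //=.
by rewrite IH; apply: funext => u; rewrite /Mv; field.
Qed.

Lemma Q_bound (M : nat -> 'I_n -> 'I_n) t k (hn : (0 < n)%N) (eps : R)
  (sm : forall xi : 'rV[R]_n, disc_le xi n%:R -> disc_le (cont_run M t k xi) eps)
  (g : 'I_n -> R) (g0 : forall v, 0 <= g v) (u0 : 'I_n) :
  n%:R * Q M t k g u0 <= (1 + eps) * \sum_v g v.
Proof.
pose xi : 'rV[R]_n := \row_v (if v == u0 then n%:R else 0).
have dxi : disc_le xi n%:R.
  move=> a b; rewrite !mxE; case: (a == u0); case: (b == u0);
    by rewrite ?subrr ?normr0 ?subr0 ?sub0r ?normrN ?normr_nat ?ler0n.
set p := cont_run M t k xi.
have dp := sm xi dxi.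
have sxi : forall q : 'I_n -> R, \sum_u xi 0 u * q u = n%:R * q u0.
  move=> q; rewrite (bigD1 u0) //= mxE eqxx big1 ?addr0 //.
  by move=> u /negbTE hu; rewrite mxE hu mul0r.
have e2 : \sum_v p 0 v = n%:R.
  have := dual M k t xi (fun _ => 1); rewrite Q_one sxi mulr1 => ->.
  by apply: eq_bigr => v _; rewrite mulr1.
have nR : (0 : R) < n%:R by rewrite ltr0n.
have pv : forall v, p 0 v <= 1 + eps.
  move=> v.
  have H : \sum_(w : 'I_n) p 0 v <= \sum_(w : 'I_n) (p 0 w + eps).
    apply: ler_sum => w _.
    have H1 := dp v w; have H2 := ler_norm (p 0 v - p 0 w).
    have H3 := le_trans H2 H1; by rewrite -lerBlDl.
  move: H; rewrite sumr_const big_split /= e2 sumr_const cardT size_enum_ord => H.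
  by rewrite -(ler_pM2l nR) mulrDr mulr1 !mulr_natl.
have := dual M k t xi g; rewrite sxi => ->.
rewrite mulr_sumr; apply: ler_sum => v _.
by apply: ler_wpM2r; [apply: g0 | apply: pv].
Qed.

End Part1.

Lemma ln_ge1 (R : realType) (n : nat) : (4 <= n)%N -> 1 <= ln (n%:R : R).
Proof.
move=> n4.
have h2 : 1 / 2 <= ln (2 : R).
  have := expR_ge1Dx (- ln (2 : R)); rewrite expRN lnK ?posrE //.
  move=> H; have : (2 : R)^-1 = 1 / 2 by rewrite div1r.
  move=> e; rewrite e in H; lra.
have h4 : ln (4 : R) = 2 * ln 2.
  have -> : (4 : R) = 2 ^+ 2 by rewrite expr2; lra.
  by rewrite lnXn // mulr_natl.
have : ln (4 : R) <= ln (n%:R : R).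
  rewrite ler_ln ?posrE ?ltr0n //; last by apply: leq_trans n4.
  by rewrite (ler_nat R 4 n).
lra.
Qed.

Lemma powR_ge1' (R : realType) (a r : R) : 1 <= a -> 0 <= r -> 1 <= a `^ r.
Proof.
move=> a1 r0; rewrite /powR.
have -> : (a == 0) = false by apply/negbTE; rewrite gt_eqF // (lt_le_trans ltr01 a1).
by rewrite -expR0 ler_expR mulr_ge0 // ln_ge0.
Qed.

Theorem lemma3p5 (R : realType) (sigma delta : R) :
  0 < sigma < 1 -> 0 < delta ->
  exists N : nat, forall n : nat, (N <= n)%N ->
  forall (E : rel 'I_n) (M : nat -> 'I_n -> 'I_n),
  simple_graph E -> (forall t, is_matching E (M t)) ->
  forall t1 t2 : nat, (t1 < t2)%N ->
  smoothing M t1 t2 (n%:R : R) ((n%:R : R) ^- 3) ->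
  forall (x : 'I_n -> nat) (y : 'I_n -> R),
  \sum_(v < n) ((x v)%:R : R) <= n%:R * expR (- (ln (n%:R : R) `^ sigma)) ->
  (forall v, 0 <= y v) -> \sum_(v < n) y v = 1 ->
  prob R (fun w : coins n (t2 - t1) =>
          expR (- (5^-1 * ln (n%:R : R) `^ sigma))
            + 8 * norm_inf y * ln (n%:R : R) `^ delta
          <= \sum_(v < n) y v * ((load_at M t1 t2 x w v)%:R : R))
    <= expR (- (ln (n%:R : R) `^ (delta + sigma)) / 6).
Proof.
move=> /andP[s0 s1] d0.
exists 4%N => n n4 E M _ Hmatch t1 t2 _ Hsm x y Hx y0 y1.
have inv : forall t u, M t (M t u) = u by move=> t u; case: (Hmatch t).
have n0 : (0 < n)%N by apply: leq_trans n4.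
have nR : (0 : R) < n%:R by rewrite ltr0n.
have nR0 : (n%:R : R) != 0 by rewrite gt_eqF.
have ell1 : 1 <= ln (n%:R : R) by apply: ln_ge1.
set ell := ln (n%:R : R) in ell1 Hx *.
have a1 : 1 <= ell `^ sigma by apply: powR_ge1' => //; exact: ltW.
set a := ell `^ sigma in a1 Hx *.
have yY : forall v, y v <= norm_inf y.
  move=> v; apply: le_trans (ler_norm (y v)) _; rewrite /norm_inf.
  exact: (le_bigmax 0 (fun v => `|y v|) v).
set Y := norm_inf y in yY *.
have Y0 : 0 < Y.
  have : \sum_(v < n) y v <= \sum_(v < n) Y by apply: ler_sum => v _.
  rewrite y1 sumr_const card_ord -mulr_natl => H.
  nra.
set L := a / 4.
set lam := L / Y.
have L0 : 0 <= L by rewrite /L divr_ge0 //; lra.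
have lam0 : 0 <= lam by rewrite /lam divr_ge0 // ltW.
have lamY : lam * Y = L by rewrite /lam divfK // gt_eqF.
pose g := fun v => expR (lam * y v).
have g0 : forall v, 0 <= g v by move=> v; exact: ltW (expR_gt0 _).
set k := (t2 - t1)%N.
set eps : R := n%:R ^- 3.
have eps0 : 0 <= eps by rewrite /eps invr_ge0 exprn_ge0 // ltW.
set B := (1 + eps) / n%:R * \sum_v g v.
have QB : forall u, Q M t1 k g u <= B.
  move=> u; have H := Q_bound n0 Hsm g0 u.
  rewrite -(ler_pM2l nR) /B.
  have -> : n%:R * ((1 + eps) / n%:R * \sum_v g v) = (1 + eps) * \sum_v g v.
    by field.
  exact: H.
have B0 : 0 <= B by rewrite /B mulr_ge0 ?divr_ge0 ?sumr_ge0 // ?addr_ge0 // ltW.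
set m := (\sum_v x v)%N.
have Phi_le : Phi (Q M t1 k g) x <= B ^+ m.
  rewrite /Phi /m -prodrXr; apply: ler_prod => v _.
  rewrite exprn_ge0 ?Q_ge0 //=; apply: lerXn2r; rewrite ?nnegrE ?Q_ge0 //.
have sumg : \sum_v g v <= n%:R + lam * expR L.
  have H : forall v, g v <= 1 + lam * y v * expR L.
    move=> v.
    have e1 := expR_ge1Dx (- (lam * y v)).
    have hy : lam * y v <= L by rewrite -lamY; apply: ler_wpM2l.
    have e2 : expR (lam * y v) <= expR L by rewrite ler_expR.
    have ly0 : 0 <= lam * y v by rewrite mulr_ge0.
    have e3 : g v * (1 - lam * y v) <= 1.
      rewrite -[1 in X in _ <= X](@divff _ (g v)) ?gt_eqF ?expR_gt0 //.
      apply: (ler_wpM2l (g0 v)); rewrite /g -expRN; lra.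
    have e4 : g v * (lam * y v) <= expR L * (lam * y v) by apply: ler_wpM2r.
    rewrite /g in e3 e4 *; nra.
  apply: le_trans (ler_sum _ (fun v _ => H v)) _.
  rewrite big_split sumr_const card_ord /= -mulr_suml -mulr_sumr y1 mulr1.
  done.
have Bexp : B <= expR (eps + lam * expR L / n%:R).
  apply: (@le_trans _ _ ((1 + eps) * (1 + lam * expR L / n%:R))).
    rewrite /B -mulrA; apply: ler_wpM2l; first by rewrite addr_ge0.
    have -> : 1 + lam * expR L / n%:R = (n%:R + lam * expR L) / n%:R by field.
    rewrite mulrC; apply: ler_wpM2r; [by rewrite invr_ge0 ltW | exact: sumg].
  rewrite expRD; apply: ler_pM.
  - by rewrite addr_ge0.
  - apply: addr_ge0 => //; apply: divr_ge0; last exact: ler0n.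
    by apply: mulr_ge0 => //; exact: ltW (expR_gt0 _).
  - exact: expR_ge1Dx.
  - exact: expR_ge1Dx.
have Bm : B ^+ m <= expR ((eps + lam * expR L / n%:R) * m%:R).
  rewrite expRM_natr; apply: lerXn2r => //; rewrite nnegrE //; exact: ltW (expR_gt0 _).
set T := expR (- (5^-1 * a)) + 8 * Y * ell `^ delta.
have Phi0 : forall (f : 'I_n -> R) (z : 'I_n -> nat), (forall v, 0 <= f v) -> 0 <= Phi f z.
  by move=> f z f0; rewrite /Phi prodr_ge0 // => v _; rewrite exprn_ge0.
have PhiE : forall w : coins n k, Phi g (load_at M t1 t2 x w) =
    expR (lam * \sum_(v < n) y v * (load_at M t1 t2 x w v)%:R).
  move=> w; rewrite /Phi mulr_sumr expR_sum; apply: eq_bigr => v _.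
  by rewrite /g mulrA expRM_natr.
have avg := avg_bound inv k t1 x g0.
have Ccard : (#|{: coins n k}|%:R : R) = (2 ^+ n) ^+ k.
  by rewrite /coins card_ffun card_ffun card_bool !card_ord natrX natrX.
set C := ((2 : R) ^+ n) ^+ k in avg Ccard.
have C0 : 0 < C by rewrite /C !exprn_gt0.
set X1 := (eps + lam * expR L / n%:R) * m%:R.
have Hexp : X1 - lam * T <= - ell `^ (delta + sigma) / 6.
  have hm : (m%:R : R) <= n%:R * expR (- a) by rewrite /m natr_sum.
  have c0 : 0 <= eps + lam * expR L / n%:R.
    apply: addr_ge0 => //; apply: divr_ge0; last exact: ler0n.
    by apply: mulr_ge0 => //; exact: ltW (expR_gt0 _).
  have h1 : X1 <= (eps + lam * expR L / n%:R) * (n%:R * expR (- a)).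
    by apply: ler_wpM2l.
  have h2 : (eps + lam * expR L / n%:R) * (n%:R * expR (- a)) =
      eps * n%:R * expR (- a) + lam * expR (L - a).
    by rewrite expRD; field.
  have h3 : eps * n%:R * expR (- a) <= 1.
    have en : eps * n%:R <= 1.
      have -> : eps * n%:R = (n%:R ^+ 2)^-1 by rewrite /eps; field.
      by rewrite invf_le1 ?exprn_gt0 // exprn_ege1 // ler1n.
    have ea : expR (- a) <= 1 by rewrite expR_le1; lra.
    have en0 : 0 <= eps * n%:R by rewrite mulr_ge0 // ler0n.
    have ea0 : 0 <= expR (- a) by exact: ltW (expR_gt0 _).
    nra.
  have h4 : lam * expR (L - a) <= lam * expR (- (5^-1 * a)).
    by apply: ler_wpM2l => //; rewrite ler_expR /L; lra.
  have h5 : lam * T = lam * expR (- (5^-1 * a)) + 2 * (ell `^ delta * a).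
    rewrite /T mulrDr; congr (_ + _).
    have -> : lam * (8 * Y * ell `^ delta) = 8 * (lam * Y) * ell `^ delta by ring.
    by rewrite lamY /L; field.
  have h6 : ell `^ (delta + sigma) = ell `^ delta * a.
    by rewrite powRD // (gt_eqF (lt_le_trans ltr01 ell1)) implybT.
  have hs1 : 1 <= ell `^ delta * a.
    have := powR_ge1' ell1 (ltW d0); nra.
  rewrite h6; lra.
have HP : (#|(fun w : coins n k => T <= \sum_(v < n) y v * (load_at M t1 t2 x w v)%:R)|%:R : R)
    * expR (lam * T) <= C * B ^+ m.
  rewrite mulr_natl -sumr_const.
  apply: (@le_trans _ _ (\sum_(w in (fun w : coins n k => T <= \sum_(v < n) y v * (load_at M t1 t2 x w v)%:R)) Phi g (load_at M t1 t2 x w))).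
    by apply: ler_sum => w Hw; rewrite PhiE ler_expR; apply: ler_wpM2l.
  apply: (@le_trans _ _ (\sum_(w : coins n k) Phi g (load_at M t1 t2 x w))).
    rewrite [X in X <= _]big_mkcond /=; apply: ler_sum => w _.
    by case: ifP => // _; apply: Phi0.
  apply: le_trans avg _.
  by apply: ler_wpM2l; [exact: ltW | exact: Phi_le].
rewrite /prob Ccard ler_pdivrMr //.
rewrite -(ler_pM2r (expR_gt0 (lam * T))).
apply: le_trans HP _.
apply: (@le_trans _ _ (C * expR (- ell `^ (delta + sigma) / 6 + lam * T))).
  apply: ler_wpM2l; first exact: ltW.
  apply: le_trans Bm _; rewrite ler_expR -/X1; lra.
by rewrite expRD le_eqVlt; apply/orP; left; apply/eqP; ring.
Qed.
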